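(* Let $\mathcal{P}_1=\{f\in\mathcal{P}:\sum_{k=1}^n|\hat{f}_k|\le 1\}$. Then $\mathcal{P}_1$ is convex and compact, its extreme points are exactly $\mathbb{0},u_1,\dots,u_n$ (where $\mathbb{0}$ is the zero signal), and $$\mathcal{P}_1=\mathrm{conv}\{\mathbb{0},u_1,\dots,u_n\}.$$
   Context: Let $G$ be a graph with vertices $v_1,\dots,v_n$, symmetric non-negative weighted adjacency matrix $\mathbf{A}$, degree matrix $\mathbf{D}=\mathrm{diag}(\sum_k\mathbf{A}_{ik})$ (positive), and normalized Laplacian $\mathbf{L}=\mathbf{I}_n-\mathbf{D}^{-1/2}\mathbf{A}\mathbf{D}^{-1/2}$. Signals are vectors in $\mathcal{L}(G)\cong\mathbb{R}^n$ with standard basis $e_1,\dots,e_n$. Fix an orthonormal eigendecomposition $\mathbf{L}=\mathbf{U}\,\mathrm{diag}(\lambda_1,\dots,\lambda_n)\mathbf{U}^\intercal$ with columns $u_1,\dots,u_n$. Fourier transform $\hat{x}=\mathbf{U}^\intercal x$; convolution operator $\mathbf{C}_x=\mathbf{U}\,\mathrm{diag}(\hat{x})\mathbf{U}^\intercal$. For $f\in\mathcal{L}(G)$ let $(\mathbf{K}_f)_{ij}=(\mathbf{C}_{e_j}f)(v_i)$; $f$ is positive semi-definite if $\mathbf{K}_f$ is symmetric positive semi-definite. $\mathcal{P}$ denotes the set of positive semi-definite functions. *)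

(* Defs.v *)
From HB Require Import structures.
From mathcomp Require Import all_boot all_order all_algebra.
From mathcomp Require Import all_classical all_reals all_analysis.
Set Implicit Arguments. Unset Strict Implicit. Unset Printing Implicit Defensive.
Import Order.TTheory GRing.Theory Num.Theory.
Local Open Scope classical_set_scope.
Local Open Scope ring_scope.

Definition degmx (R : realType) (n : nat) (A : 'M[R]_n) : 'M[R]_n :=
  \matrix_(i, j) ((i == j)%:R * \sum_k A i k).

Definition degmx_isqrt (R : realType) (n : nat) (A : 'M[R]_n) : 'M[R]_n :=
  \matrix_(i, j) ((i == j)%:R * (Num.sqrt (\sum_k A i k))^-1).

Definition normLap (R : realType) (n : nat) (A : 'M[R]_n) : 'M[R]_n :=
  1%:M - degmx_isqrt A *m A *m degmx_isqrt A.

Definition gft (R : realType) (n : nat) (U : 'M[R]_n) (x : 'cV[R]_n) : 'cV[R]_n :=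
  U^T *m x.

Definition convop (R : realType) (n : nat) (U : 'M[R]_n) (x : 'cV[R]_n) : 'M[R]_n :=
  U *m diag_mx (gft U x)^T *m U^T.

Definition ebasis (R : realType) (n : nat) (j : 'I_n) : 'cV[R]_n := delta_mx j 0.

Definition Kmx (R : realType) (n : nat) (U : 'M[R]_n) (f : 'cV[R]_n) : 'M[R]_n :=
  \matrix_(i, j) (convop U (ebasis R j) *m f) i 0.

Definition psd_mx (R : realType) (n : nat) (M : 'M[R]_n) : Prop :=
  M^T = M /\ forall v : 'cV[R]_n, 0 <= (v^T *m M *m v) 0 0.

Definition psd_funs (R : realType) (n : nat) (U : 'M[R]_n) : set 'cV[R]_n :=
  [set f | psd_mx (Kmx U f)].

Definition psd_funs1 (R : realType) (n : nat) (U : 'M[R]_n) : set 'cV[R]_n :=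
  [set f | psd_funs U f /\ \sum_k `|gft U f k 0| <= 1].

Definition extreme_point (R : realType) (V : lmodType R) (S : set V) (x : V) : Prop :=
  S x /\ forall (y z : V) (t : R), S y -> S z -> 0 < t -> t < 1 ->
    x = t *: y + (1 - t) *: z -> y = z.

Definition conv_hull (R : realType) (V : lmodType R) (S : set V) : set V :=
  [set x | exists (m : nat) (w : 'I_m -> R) (p : 'I_m -> V),
     (forall i, 0 <= w i) /\ \sum_i w i = 1 /\ (forall i, S (p i)) /\
     x = \sum_i w i *: p i].

(* Main.v *)
Require Import Defs.
From HB Require Import structures.
From mathcomp Require Import all_boot all_order all_algebra.
From mathcomp Require Import all_classical all_reals all_analysis.
From mathcomp Require Import lra.
Import Order.TTheory GRing.Theory Num.Theory.
Local Open Scope classical_set_scope.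
Local Open Scope ring_scope.

Section Alg.
Variables (R : realType) (n : nat) (U : 'M[R]_n).
Hypothesis hU : U^T *m U = 1%:M.

Lemma UUt : U *m U^T = 1%:M.
Proof. exact: mulmx1C. Qed.

Lemma Kmx_eq f : Kmx U f = U *m diag_mx (gft U f)^T *m U^T.
Proof.
apply/matrixP => i j; rewrite mxE /convop /gft /ebasis -colE -!mulmxA.
rewrite !mxE; apply: eq_bigr => k _.
rewrite !mul_diag_mx !mxE.
by rewrite [_ * U j k]mulrC.
Qed.

Lemma quad_diag (d : 'rV[R]_n) (w : 'cV[R]_n) :
  (w^T *m diag_mx d *m w) 0 0 = \sum_k d 0 k * (w k 0) ^+ 2.
Proof.
rewrite mul_mx_diag mxE; apply: eq_bigr => k _; rewrite !mxE.
by rewrite [w k 0 * _]mulrC -mulrA expr2.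
Qed.

Lemma gft_col k : gft U (col k U) = delta_mx k 0.
Proof.
apply/matrixP => i j; rewrite (ord1 j).
have := congr1 (fun M : 'M[R]_n => M i k) hU; rewrite /= => E.
rewrite [RHS]mxE eqxx andbT; move: E; rewrite [RHS]mxE => <-.
by rewrite /gft !mxE; apply: eq_bigr => l _; rewrite !mxE.
Qed.

Lemma gftK f : U *m gft U f = f.
Proof. by rewrite /gft mulmxA UUt mul1mx. Qed.

Lemma gft_inj f g : gft U f = gft U g -> f = g.
Proof. by move=> e; rewrite -(gftK f) e gftK. Qed.

Lemma quadU (D : 'M[R]_n) (v : 'cV[R]_n) :
  v^T *m (U *m D *m U^T) *m v = (U^T *m v)^T *m D *m (U^T *m v).
Proof. by rewrite trmx_mul trmxK !mulmxA. Qed.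

Lemma psdP f : psd_funs U f <-> forall k, 0 <= gft U f k 0.
Proof.
rewrite /psd_funs /psd_mx /= Kmx_eq; split.
  move=> [_ H] k; have := H (col k U).
  rewrite quadU -/(gft U (col k U)) gft_col quad_diag (bigD1 k) //= big1 ?addr0.
    by rewrite !mxE eqxx expr1n mulr1.
  by move=> l /negbTE lk; rewrite !mxE lk /= expr0n /= mulr0.
move=> H; split.
  by rewrite !trmx_mul trmxK tr_diag_mx mulmxA.
move=> v; rewrite quadU quad_diag.
apply: sumr_ge0 => k _; rewrite mxE mulr_ge0 // sqr_ge0 //.
Qed.

Lemma P1P f : psd_funs1 U f <->
  (forall k, 0 <= gft U f k 0) /\ \sum_k gft U f k 0 <= 1.
Proof.
rewrite /psd_funs1 /=; split.
  move=> [/psdP H s]; split => //.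
  by under eq_bigr => k _ do rewrite -(ger0_norm (H k)).
move=> [H s]; split; first exact/psdP.
by under eq_bigr => k _ do rewrite (ger0_norm (H k)).
Qed.


Notation P1 := (psd_funs1 U).

Lemma gft0 : gft U 0 = 0.
Proof. by rewrite /gft mulmx0. Qed.

Lemma gftD x y : gft U (x + y) = gft U x + gft U y.
Proof. by rewrite /gft mulmxDr. Qed.

Lemma gftZ a x : gft U (a *: x) = a *: gft U x.
Proof. by rewrite /gft scalemxAr. Qed.

Lemma gftB x y : gft U (x - y) = gft U x - gft U y.
Proof. by rewrite /gft mulmxBr. Qed.

Lemma P1_coord_le1 y k : P1 y -> gft U y k 0 <= 1.
Proof.
move=> /P1P [h s]; apply: le_trans s.
rewrite (bigD1 k) //= lerDl; exact: sumr_ge0.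
Qed.

Lemma P1_one y k : P1 y -> gft U y k 0 = 1 -> y = col k U.
Proof.
move=> /P1P [h s] e; apply: gft_inj; rewrite gft_col.
have H0 : \sum_(j | j != k) gft U y j 0 = 0.
  apply/le_anti/andP; split; last exact: sumr_ge0.
  move: s; rewrite (bigD1 k) //=; lra.
apply/matrixP => i j; rewrite (ord1 j) [RHS]mxE eqxx andbT.
have [->|ik] := eqVneq i k; first by rewrite e.
by rewrite (psumr_eq0P _ H0) //.
Qed.

Lemma P1_col k : P1 (col k U).
Proof.
apply/P1P; rewrite gft_col; split.
  by move=> j; rewrite mxE ler0n.
rewrite (bigD1 k) //= big1 ?addr0; first by rewrite mxE !eqxx.
by move=> j /negbTE jk; rewrite mxE jk.
Qed.

Lemma P1_0 : P1 0.
Proof.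
apply/P1P; rewrite gft0; split; first by move=> j; rewrite mxE.
by rewrite big1 ?ler01 // => j _; rewrite mxE.
Qed.

Lemma gft_neq0 x : x != 0 -> exists k, gft U x k 0 != 0.
Proof.
move=> x0; apply/existsP; apply: contraR x0; rewrite negb_exists => /forallP H.
apply/eqP; rewrite -(gftK x); apply/matrixP => i j; rewrite (ord1 j).
rewrite !mxE big1 // => k _; have := H k; rewrite negbK => /eqP ->; by rewrite mulr0.
Qed.


Lemma P1_convex : convex_set (P1 : set (convex_lmodType 'cV[R]_n)).
Proof.
move=> x y l; rewrite !inE => /P1P [hx sx] /P1P [hy sy]; apply/P1P.
have -> : conv l x y = l%:num *: (x : 'cV[R]_n) + (1 - l%:num) *: (y : 'cV[R]_n) by [].
have l0 : 0 <= l%:num by exact: ge0.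
have l1 : l%:num <= 1 by exact: le1.
rewrite gftD !gftZ; move: hx sx hy sy; move: (gft U x) (gft U y) => a b hx sx hy sy; split.
  move=> k; rewrite !mxE; have := hx k; have := hy k; nra.
under eq_bigr => k _ do rewrite !mxE.
rewrite big_split /= -!mulr_sumr.
nra.
Qed.


Lemma cZ (a : R) (v : 'cV[R]_n) i : (a *: v) i 0 = a * v i 0.
Proof. by rewrite mxE. Qed.
Lemma cD (v w : 'cV[R]_n) i : (v + w) i 0 = v i 0 + w i 0.
Proof. by rewrite mxE. Qed.
Lemma cB (v w : 'cV[R]_n) i : (v - w) i 0 = v i 0 - w i 0.
Proof. by rewrite !mxE. Qed.
Lemma c0 i : (0 : 'cV[R]_n) i 0 = 0.
Proof. by rewrite mxE. Qed.
Lemma cdelta k i : (delta_mx k 0 : 'cV[R]_n) i 0 = (i == k)%:R.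
Proof. by rewrite mxE eqxx andbT. Qed.
Lemma sum_delta k : \sum_i (delta_mx k 0 : 'cV[R]_n) i 0 = 1.
Proof.
rewrite (bigD1 k) //= big1 ?addr0; first by rewrite cdelta eqxx.
by move=> j /negbTE jk; rewrite cdelta jk.
Qed.

Lemma ext_iff x : extreme_point P1 x <-> (x = 0 \/ exists k, x = col k U).
Proof.
split; last first.
  case => [->|[k ->]].
    split; first exact: P1_0.
    move=> y z t Py Pz t0 t1 e.
    have e' := congr1 (gft U) e; rewrite gft0 gftD !gftZ in e'.
    apply: gft_inj; move: Py Pz => /P1P [hy _] /P1P [hz _].
    move: e' hy hz; move: (gft U y) (gft U z) => a b e' ha hb.
    have Ha i : a i 0 = 0 /\ b i 0 = 0.
      have := congr1 (fun M : 'cV[R]_n => M i 0) e'; rewrite /= c0 cD !cZ.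
      have := ha i; have := hb i; split; nra.
    by apply/matrixP => i j; rewrite (ord1 j) (proj1 (Ha i)) (proj2 (Ha i)).
  split; first exact: P1_col.
  move=> y z t Py Pz t0 t1 e.
  have e' := congr1 (gft U) e; rewrite gft_col gftD !gftZ in e'.
  have hy1 := @P1_coord_le1 y k Py; have hz1 := @P1_coord_le1 z k Pz.
  have /P1P [hy sy] := Py; have /P1P [hz sz] := Pz.
  have := congr1 (fun M : 'cV[R]_n => M k 0) e'; rewrite /= cdelta eqxx cD !cZ mulr1n => ek.
  have [ey ez] : gft U y k 0 = 1 /\ gft U z k 0 = 1.
  move: ek hy1 hz1 hy hz sy sz; move: (gft U y) (gft U z) => a b ek hy1 hz1 hy hz _ _.
  have h1 : 0 <= (1 - t) * (1 - b k 0) by apply: mulr_ge0; lra.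
  have h2 : 0 <= t * (1 - a k 0) by apply: mulr_ge0; lra.
  have h3 : t * (1 - a k 0) <= 0 by lra.
  have h4 : (1 - t) * (1 - b k 0) <= 0 by lra.
  move: h3 h4; rewrite pmulr_rle0 // pmulr_rle0 ?subr_gt0 // => h3 h4.
  split; lra.
  by rewrite (@P1_one y k Py ey) (@P1_one z k Pz ez).
move=> [Px ext].
have [->|x0] := eqVneq x 0; [by left|right].
have [k hk] := @gft_neq0 x x0.
have c1 := @P1_coord_le1 x k Px.
have /P1P [hx sx] := Px.
have cpos : 0 < gft U x k 0 by rewrite lt_neqAle eq_sym hk hx.
have [e1|ne1] := eqVneq (gft U x k 0) 1; first by exists k; exact: P1_one.
exfalso.
have clt : gft U x k 0 < 1 by rewrite lt_neqAle ne1 c1.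
move: hx sx cpos clt c1 hk ne1 ext.
have -> : x = U *m gft U x by rewrite gftK.
have gU v : gft U (U *m v) = v by rewrite /gft mulmxA hU mul1mx.
rewrite gU; move: (gft U x) => a ha sa cpos clt _ _ _ ext.
set c := a k 0.
have nz : 1 - c != 0 by rewrite subr_eq0 eq_sym lt_eqF.
set z := (1 - c)^-1 *: (U *m a - c *: col k U).
have gz : gft U z = (1 - c)^-1 *: (a - c *: delta_mx k 0).
  by rewrite /z gftZ gftB gftZ gU gft_col.
have Pz : P1 z.
  apply/P1P; rewrite gz; split.
    move=> j; rewrite cZ cB cZ cdelta.
    have [->|jk] := eqVneq j k.
      by rewrite mulr1 subrr mulr0.
    rewrite mulr0 subr0 mulr_ge0 // invr_ge0 subr_ge0 ltW //.
  under eq_bigr => j _ do rewrite cZ cB cZ.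
  rewrite -mulr_sumr sumrB -mulr_sumr sum_delta mulr1 mulrC ler_pdivrMr ?subr_gt0 //.
  by rewrite mul1r lerD2r.
have E : U *m a = c *: col k U + (1 - c) *: z.
  by rewrite /z scalerA mulfV // scale1r addrC subrK.
have := ext _ _ _ (P1_col k) Pz cpos clt E.
move=> /(congr1 (gft U)); rewrite gz gft_col => /(congr1 (fun M : 'cV[R]_n => M k 0)).
rewrite /= cdelta eqxx cZ cB cZ cdelta eqxx mulr1 subrr mulr0.
by move/eqP; rewrite oner_eq0.
Qed.


Lemma P1_conv : P1 = conv_hull ([set 0] `|` [set x | exists k, x = col k U]).
Proof.
apply/seteqP; split => x.
  move=> Px; have /P1P [hx sx] := Px.
  exists n.+1.
  exists (fun i => if unlift ord0 i is Some k then gft U x k 0 else 1 - \sum_k gft U x k 0).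
  exists (fun i => if unlift ord0 i is Some k then col k U else 0).
  split; first by move=> i; case: unlift => [k|]; [exact: hx| rewrite subr_ge0].
  split.
    rewrite big_ord_recl unlift_none [X in _ + X](eq_bigr (fun i => gft U x i 0)).
      by rewrite subrK.
    by move=> i _; rewrite liftK.
  split; first by move=> i; case: unlift => [k|]; [right; exists k | left].
  rewrite big_ord_recl unlift_none scaler0 add0r.
  rewrite (eq_bigr (fun i => gft U x i 0 *: col i U)); last first.
    by move=> i _; rewrite liftK.
  rewrite -{1}(gftK x); move: (gft U x) => a.
  apply/matrixP => i j; rewrite (ord1 j) summxE mxE; apply: eq_bigr => k _.
  by rewrite !mxE mulrC.
move=> [m [w [p [w0 [w1 [Sp ->]]]]]].
have Pp i : P1 (p i) by case: (Sp i) => [->|[k ->]]; [exact: P1_0 | exact: P1_col].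
apply/P1P.
have -> : gft U (\sum_i w i *: p i) = \sum_i w i *: gft U (p i).
  by rewrite /gft mulmx_sumr; apply: eq_bigr => i _; rewrite scalemxAr.
have hp i := (iffLR (P1P (p i))) (Pp i).
move: hp; move: (fun i => gft U (p i)) => q hq.
split.
  move=> k; rewrite summxE; apply: sumr_ge0 => i _.
  by rewrite cZ mulr_ge0 //; exact: (proj1 (hq i)).
under eq_bigr => k _ do rewrite summxE.
rewrite exchange_big /= -w1; apply: ler_sum => i _.
under eq_bigr => k _ do rewrite cZ.
rewrite -mulr_sumr ler_piMr //; exact: (proj2 (hq i)).
Qed.


Lemma cont_sum (T : topologicalType) (I : Type) (r : seq I) (F : I -> T -> R^o) :
  (forall i, continuous (F i)) -> continuous (fun x => \sum_(i <- r) F i x).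
Proof.
elim: r => [|i r IH] HF.
  under eq_fun do rewrite big_nil; exact: cst_continuous.
under eq_fun do rewrite big_cons.
by move=> x; apply: continuousD; [exact: HF | exact: IH].
Qed.

Lemma gft_cont k : continuous (fun f : 'M[R^o]_(n, 1) => (gft U f k 0 : R^o)).
Proof.
have -> : (fun f : 'M[R^o]_(n, 1) => (gft U f k 0 : R^o)) =
          (fun f => \sum_j (U^T k j : R^o) * f j 0).
  by apply: funext => f; rewrite /gft mxE.
apply: cont_sum => j x.
apply: (@continuousM _ _ (fun _ => (U^T k j : R^o)) (fun f : 'M[R^o]_(n, 1) => (f j 0 : R^o))).
  exact: (@cst_continuous _ R^o (U^T k j) x).
exact: (@coord_continuous R^o n 1 j 0 x).
Qed.

Lemma abs_gft_cont k : continuous (fun f : 'M[R^o]_(n, 1) => (`|gft U f k 0| : R^o)).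
Proof.
move=> x; apply: (continuous_comp (gft_cont k x)); exact: norm_continuous.
Qed.

Lemma P1_closed : closed (P1 : set 'M[R^o]_(n, 1)).
Proof.
pose h1 := fun f : 'M[R^o]_(n, 1) => (\sum_k `|gft U f k 0| : R^o).
pose h2 := fun f : 'M[R^o]_(n, 1) => (\sum_k (`|gft U f k 0| - gft U f k 0) : R^o).
have c1 : continuous h1 by apply: cont_sum => k; exact: abs_gft_cont.
have c2 : continuous h2.
  apply: cont_sum => k x; apply: continuousB; [exact: abs_gft_cont | exact: gft_cont].
have -> : (P1 : set 'M[R^o]_(n, 1)) = h1 @^-1` [set x | x <= 1] `&` h2 @^-1` [set x | x <= 0].
  apply/seteqP; split => f.
    move=> [/psdP hf s]; split => //=; rewrite /h2 big1 // => k _.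
    by rewrite ger0_norm // subrr.
  move=> [/= s t]; split => //; apply/psdP => k.
  have t0 : \sum_k (`|gft U f k 0| - gft U f k 0) = 0.
    by apply/le_anti; rewrite t /=; apply: sumr_ge0 => i _; rewrite subr_ge0 ler_norm.
  have nn : forall i : 'I_n, true -> 0 <= `|gft U f i 0| - gft U f i 0.
    by move=> i _; rewrite subr_ge0 ler_norm.
  have := @psumr_eq0P _ _ _ _ nn t0 k isT.
  by move/eqP; rewrite subr_eq0 => /eqP <-.
apply: closedI.
  by apply: (proj1 (continuous_closedP h1) c1); exact: closed_le.
by apply: (proj1 (continuous_closedP h2) c2); exact: closed_le.
Qed.


Lemma U_le1 i k : `|U i k| <= 1.
Proof.
have := congr1 (fun M : 'M[R]_n => M k k) hU; rewrite /= !mxE eqxx mulr1n => E.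
have : U i k ^+ 2 <= 1.
  rewrite -E (bigD1 i) //= [U^T k i]mxE -expr2 lerDl; apply: sumr_ge0 => j _; rewrite mxE; rewrite -expr2; exact: sqr_ge0.
rewrite ler_norml => h; apply/andP; split; nra.
Qed.

Lemma box (w : 'rV[R^o]_n) : P1 w^T -> forall i, `|w 0 i| <= 1.
Proof.
move=> Pw i; have /P1P [h s] := Pw.
have -> : w 0 i = w^T i 0 by rewrite mxE.
rewrite -(gftK w^T); move: h s; move: (gft U w^T) => a h s.
rewrite mxE; apply: le_trans (ler_norm_sum _ _ _) _; apply: le_trans s.
apply: ler_sum => k _; rewrite normrM (ger0_norm (h k)).
by rewrite ler_piMl // U_le1.
Qed.

Lemma P1_compact : compact (P1 : set 'M[R^o]_(n, 1)).
Proof.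
pose B := [set w : 'rV[R^o]_n | P1 w^T].
have trc : continuous (fun w : 'rV[R^o]_n => (w^T : 'M[R^o]_(n, 1))).
  move=> w A /nbhs_ballP [e e0 eA]; apply/nbhs_ballP; exists e => // v [_ wv].
  by apply: eA; split => // i j; rewrite !mxE; exact: wv.
have Bc : closed B := (proj1 (continuous_closedP _) trc) _ P1_closed.
have Bk : compact B.
  have sc : compact (`[-1, 1]%classic : set R^o) by exact: segment_compact.
  have := @rV_compact R^o n (fun _ => `[-1, 1]%classic) (fun _ => sc).
  move=> rc.
  apply: (subclosed_compact Bc rc).
  move=> w Bw i /=; rewrite in_itv /= -ler_norml; exact: box.
have -> : (P1 : set 'M[R^o]_(n, 1)) = (fun w => w^T) @` B.
  apply/seteqP; split => f.
    by move=> Pf; exists f^T; rewrite /B /= trmxK.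
  by move=> [w Bw <-].
apply: continuous_compact => //; exact: continuous_subspaceT.
Qed.

End Alg.

Theorem theorem2 (R : realType) (n : nat) (A : 'M[R]_n) (U : 'M[R]_n)
    (lam : 'I_n -> R)
    (hAsym : A^T = A)
    (hAnn : forall i j, 0 <= A i j)
    (hdeg : forall i, 0 < \sum_k A i k)
    (hUorth : U^T *m U = 1%:M)
    (hLeig : normLap A = U *m diag_mx (\row_k lam k) *m U^T) :
  convex_set (psd_funs1 U : set (convex_lmodType 'cV[R]_n)) /\
  compact (psd_funs1 U : set 'M[R^o]_(n, 1)) /\
  (forall x : 'cV[R]_n,
     extreme_point (psd_funs1 U) x <-> (x = 0 \/ exists k : 'I_n, x = col k U)) /\
  psd_funs1 U = conv_hull ([set 0] `|` [set x | exists k : 'I_n, x = col k U]).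
Proof.
split; first exact: (@P1_convex R n U hUorth).
split; first exact: (@P1_compact R n U hUorth).
split; first exact: (@ext_iff R n U hUorth).
exact: (@P1_conv R n U hUorth).
Qed.
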